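(* For every integer $r\ge1$, $\mathrm{Var}(\mu^{(r)})\le b^2\lambda(r)$.
   Context: Fix an integer $b\ge2$. For $n\in\mathbb{N}$ with base-$b$ digits $n_k$, $s(n):=\sum_kn_k$. For $r,n\in\mathbb{N}$, $\Delta^{(r)}(n):=s(n+r)-s(n)$, and $\mu^{(r)}(d):=\lim_{N\to\infty}\frac1N|\{n<N:\Delta^{(r)}(n)=d\}|$ for $d\in\mathbb{Z}$; these limits exist and $\mu^{(r)}$ is a probability measure on $\mathbb{Z}$ with finite moments; $\mathrm{Var}(\mu^{(r)})$ is its variance. Blocks: write the expansion of $r\ge1$ as the digit string $r_\ell\cdots r_0$, $r_\ell\neq0$. A block is either a maximal run of consecutive $0$ digits (a block of $0$'s), or a maximal run of consecutive digits equal to $b-1$, or (when $b\ge3$) a single digit with value in $\{1,\dots,b-2\}$. $\lambda(r)$ is the number of blocks of $r$ that are not blocks of $0$'s (non-zero blocks). *)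

(* Defs.v *)
From Stdlib Require Import Reals Lra Lia ZArith Arith List.
From Coquelicot Require Import Coquelicot.
Import ListNotations.
Open Scope R_scope.

Definition digit (b n k : nat) : nat := (n / b ^ k) mod b.

(* s(n) = sum_k n_k ; digits with k > n vanish since b^k > n for b >= 2 *)
Definition digsum (b n : nat) : nat :=
  fold_right Nat.add 0%nat (map (digit b n) (seq 0 (S n))).

Definition Delta (b r n : nat) : Z :=
  (Z.of_nat (digsum b (n + r)) - Z.of_nat (digsum b n))%Z.

Definition count_Delta (b r : nat) (d : Z) (N : nat) : nat :=
  length (filter (fun n => Z.eqb (Delta b r n) d) (seq 0 N)).

Definition mu (b r : nat) (d : Z) : R :=
  real (Lim_seq (fun N => INR (count_Delta b r d N) / INR N)).

(* Enumeration of Z without repetition: k |-> k and k |-> -(k+1). *)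
Definition zpos (k : nat) : Z := Z.of_nat k.
Definition zneg (k : nat) : Z := (- Z.of_nat (S k))%Z.

Definition mu_mean (b r : nat) : R :=
  Series (fun k => IZR (zpos k) * mu b r (zpos k) + IZR (zneg k) * mu b r (zneg k)).

Definition mu_var (b r : nat) : R :=
  let m := mu_mean b r in
  Series (fun k => (IZR (zpos k) - m) ^ 2 * mu b r (zpos k)
                 + (IZR (zneg k) - m) ^ 2 * mu b r (zneg k)).

(* A non-zero block is either a maximal run of digits b-1 or a
   single digit in {1,..,b-2}.  We count each non-zero block by its lowest
   position k: r_k <> 0, and not (r_k = b-1 and r_{k-1} = b-1 with k >= 1). *)
Definition block_start (b r k : nat) : bool :=
  negb (Nat.eqb (digit b r k) 0) &&
  negb (Nat.eqb (digit b r k) (b - 1) &&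
        match k with
        | O => false
        | S k' => Nat.eqb (digit b r k') (b - 1)
        end).

(* lambda(r) = number of non-zero blocks (positions > r carry zero digits). *)
Definition lambda (b r : nat) : nat :=
  length (filter (block_start b r) (seq 0 (S r))).

(* Main.v *)
Require Import Defs.
From Stdlib Require Import Reals Lra Lia ZArith Arith List.
From Coquelicot Require Import Coquelicot.
Import ListNotations.
Open Scope R_scope.

Lemma digit_0 b n : (b <> 0)%nat -> digit b n 0 = (n mod b)%nat.
Proof. intros. unfold digit. rewrite Nat.pow_0_r, Nat.div_1_r. reflexivity. Qed.

Lemma div_ab b a v : (a < b)%nat -> ((a + b * v) / b = v)%nat.
Proof.
  intros H. rewrite (Nat.mul_comm b v). rewrite Nat.div_add by lia.
  rewrite Nat.div_small by lia. lia.
Qed.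

Lemma mod_ab b a v : (a < b)%nat -> ((a + b * v) mod b = a)%nat.
Proof.
  intros H. rewrite (Nat.mul_comm b v). rewrite Nat.Div0.mod_add.
  apply Nat.mod_small; lia.
Qed.

Lemma digit_S b a v k : (a < b)%nat -> digit b (a + b * v) (S k) = digit b v k.
Proof.
  intros H. unfold digit. rewrite Nat.pow_succ_r'.
  rewrite <- Nat.Div0.div_div. rewrite div_ab by lia. reflexivity.
Qed.

Lemma digit_0' b a v : (a < b)%nat -> digit b (a + b * v) 0 = a.
Proof. intros H. rewrite digit_0 by lia. apply mod_ab; auto. Qed.

Lemma digit_big b n k : (n < b ^ k)%nat -> digit b n k = 0%nat.
Proof. intros H. unfold digit. rewrite Nat.div_small by lia. apply Nat.Div0.mod_0_l. Qed.

Definition DS b M n := list_sum (map (digit b n) (seq 0 M)).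

Lemma DS_S b M a v : (a < b)%nat -> DS b (S M) (a + b * v) = (a + DS b M v)%nat.
Proof.
  intros H. unfold DS. simpl. rewrite digit_0' by auto. f_equal.
  rewrite <- seq_shift, map_map. f_equal. apply map_ext. intros k. apply digit_S; auto.
Qed.

Lemma DS_stable b n M0 M : (2 <= b)%nat -> (n < b ^ M0)%nat -> (M0 <= M)%nat -> DS b M n = DS b M0 n.
Proof.
  intros Hb H1 H2. replace M with (M0 + (M - M0))%nat by lia. unfold DS.
  rewrite seq_app, map_app, list_sum_app.
  assert (list_sum (map (digit b n) (seq (0 + M0) (M - M0))) = 0%nat) as ->; [|lia].
  generalize (M - M0)%nat as j. intros j.
  assert (forall s, (M0 <= s)%nat -> list_sum (map (digit b n) (seq s j)) = 0%nat).
  { induction j; intros s Hs; simpl; auto. rewrite digit_big. rewrite IHj; lia.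
    apply Nat.lt_le_trans with (b ^ M0)%nat; auto. apply Nat.pow_le_mono_r; lia. }
  apply H; lia.
Qed.

Lemma lt_pow b n : (2 <= b)%nat -> (n < b ^ n)%nat.
Proof. intros. apply Nat.pow_gt_lin_r. lia. Qed.

Lemma digsum_DS b n M : (2 <= b)%nat -> (n <= M)%nat -> digsum b n = DS b M n.
Proof.
  intros Hb H. unfold digsum. change (DS b (S n) n = DS b M n).
  rewrite (DS_stable b n n (S n)) by (auto using lt_pow).
  symmetry; apply DS_stable; auto using lt_pow.
Qed.

Lemma digsum_step b a v : (2 <= b)%nat -> (a < b)%nat -> digsum b (a + b * v) = (a + digsum b v)%nat.
Proof.
  intros Hb H. rewrite (digsum_DS b (a + b * v) (S (a + b*v))) by lia.
  rewrite DS_S by auto. rewrite (digsum_DS b v (a + b * v)) by nia. reflexivity.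
Qed.

Lemma digsum_0 b : digsum b 0 = 0%nat.
Proof. unfold digsum. simpl. unfold digit. rewrite Nat.Div0.div_0_l, Nat.Div0.mod_0_l. reflexivity. Qed.

Lemma lt_pow_le b n M : (2 <= b)%nat -> (n <= M)%nat -> (n < b ^ M)%nat.
Proof. intros. apply Nat.lt_le_trans with (b ^ n)%nat. apply lt_pow; auto. apply Nat.pow_le_mono_r; lia. Qed.

Definition bs (b n : nat) (pf : bool) (k : nat) : bool :=
  negb (Nat.eqb (digit b n k) 0) &&
  negb (Nat.eqb (digit b n k) (b - 1) &&
        match k with
        | O => pf
        | S k' => Nat.eqb (digit b n k') (b - 1)
        end).

Definition LC b M n pf := list_sum (map (fun k => if bs b n pf k then 1%nat else 0%nat) (seq 0 M)).

Lemma len_filter_sum {A} (f : A -> bool) l :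
  length (filter f l) = list_sum (map (fun k => if f k then 1%nat else 0%nat) l).
Proof. induction l; simpl; auto. destruct (f a); simpl; lia. Qed.

Lemma lambda_LC b n : lambda b n = LC b (S n) n false.
Proof.
  unfold lambda, LC. rewrite len_filter_sum. reflexivity.
Qed.

Lemma bs_S b a v pf k : (a < b)%nat -> bs b (a + b * v) pf (S k) = bs b v (Nat.eqb a (b-1)) k.
Proof.
  intros H. unfold bs. rewrite digit_S by auto. destruct k.
  - rewrite digit_0' by auto. reflexivity.
  - rewrite digit_S by auto. reflexivity.
Qed.

Lemma LC_S b M a v pf : (a < b)%nat ->
  LC b (S M) (a + b * v) pf =
  ((if (negb (Nat.eqb a 0) && negb (Nat.eqb a (b-1) && pf))%bool then 1 else 0) + LC b M v (Nat.eqb a (b-1)))%nat.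
Proof.
  intros H. unfold LC. simpl. f_equal.
  - unfold bs. rewrite digit_0' by auto. reflexivity.
  - rewrite <- seq_shift, map_map. f_equal. apply map_ext. intros k. rewrite bs_S by auto. reflexivity.
Qed.

Lemma LC_stable b n pf M0 M : (2 <= b)%nat -> (n < b ^ M0)%nat -> (M0 <= M)%nat -> LC b M n pf = LC b M0 n pf.
Proof.
  intros Hb H1 H2. replace M with (M0 + (M - M0))%nat by lia. unfold LC.
  rewrite seq_app, map_app, list_sum_app.
  assert (list_sum (map (fun k => if bs b n pf k then 1%nat else 0%nat) (seq (0 + M0) (M - M0))) = 0%nat) as ->; [|lia].
  generalize (M - M0)%nat as j. intros j.
  assert (forall s, (M0 <= s)%nat -> list_sum (map (fun k => if bs b n pf k then 1%nat else 0%nat) (seq s j)) = 0%nat).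
  { induction j; intros s Hs; simpl; auto. unfold bs at 1. rewrite digit_big. simpl. rewrite IHj; lia.
    apply Nat.lt_le_trans with (b ^ M0)%nat; auto. apply Nat.pow_le_mono_r; lia. }
  apply H; lia.
Qed.

Lemma LC_true b M v : (2 <= b)%nat ->
  (LC b (S M) v true + (if Nat.eqb (v mod b) (b-1) then 1 else 0) = LC b (S M) v false)%nat.
Proof.
  intros Hb. unfold LC. simpl.
  assert (map (fun k => if bs b v true k then 1%nat else 0%nat) (seq 1 M) =
          map (fun k => if bs b v false k then 1%nat else 0%nat) (seq 1 M)) as ->.
  { apply map_ext_in. intros k Hk. apply in_seq in Hk. destruct k; [lia|]. reflexivity. }
  unfold bs at 1 3. rewrite digit_0 by lia.
  destruct (Nat.eqb_spec (v mod b) (b-1)).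
  - rewrite e. destruct (Nat.eqb_spec (b-1) 0); [lia|]. simpl. lia.
  - destruct (Nat.eqb (v mod b) 0); simpl; lia.
Qed.

Lemma lambda_step b a v : (2 <= b)%nat -> (a < b)%nat ->
  (lambda b (a + b * v) + (if (Nat.eqb a (b-1) && Nat.eqb (v mod b) (b-1))%bool then 1 else 0)
   = (if Nat.eqb a 0 then 0 else 1) + lambda b v)%nat.
Proof.
  intros Hb H. rewrite !lambda_LC.
  rewrite <- (LC_stable b (a + b * v) false (S (a + b * v)) (S (S (v + (a + b * v))))) by (try apply lt_pow_le; lia).
  rewrite LC_S by auto.
  rewrite (LC_stable b v _ (S v) (S (v + (a + b * v)))) by (try apply lt_pow_le; lia).
  destruct (Nat.eqb_spec a (b-1)).
  - subst a. destruct (Nat.eqb_spec (b-1) 0); [lia|]. simpl.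
    rewrite <- LC_true by auto. lia.
  - destruct (Nat.eqb_spec a 0); simpl; lia.
Qed.
Open Scope Z_scope.

Definition L b u := Z.of_nat (lambda b u).

Lemma L_step b a v : (2 <= b)%nat -> (a < b)%nat ->
  L b (a + b * v) = (if Nat.eqb a 0 then 0 else 1) + L b v
      - (if (Nat.eqb a (b-1) && Nat.eqb (v mod b) (b-1))%bool then 1 else 0).
Proof.
  intros Hb H. unfold L. pose proof (lambda_step b a v Hb H).
  destruct (Nat.eqb a 0); destruct (Nat.eqb a (b-1) && Nat.eqb (v mod b) (b-1))%bool; lia.
Qed.

Lemma L_nonneg b u : 0 <= L b u.
Proof. unfold L; lia. Qed.

Lemma L_pos b u : (2 <= b)%nat -> (u mod b <> 0)%nat -> 1 <= L b u.
Proof.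
  intros Hb. induction u as [u IH] using (well_founded_induction lt_wf). intros Hu.
  pose proof (Nat.div_mod u b ltac:(lia)) as E0.
  set (a := (u mod b)%nat) in *. set (v := (u / b)%nat) in *.
  assert (Ha : (a < b)%nat) by (apply Nat.mod_upper_bound; lia).
  assert (E : u = (a + b * v)%nat) by lia. clearbody a v.
  rewrite E. rewrite L_step by auto.
  destruct (Nat.eqb_spec a 0); [lia|].
  destruct (Nat.eqb_spec a (b-1)); destruct (Nat.eqb_spec (v mod b) (b-1)); cbn [andb negb];
    try (pose proof (L_nonneg b v); lia).
  assert (1 <= L b v); [|lia]. apply IH. subst u. nia. lia.
Qed.

Fixpoint Tz (b K r : nat) : Z :=
  match K with
  | O => 0
  | S K' => let a := Z.of_nat (r mod b) in
            (Z.of_nat b - a) * (Z.of_nat (b ^ K') * (a * a) + Tz b K' (r / b))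
            + a * (Z.of_nat (b ^ K') * ((Z.of_nat b - a) * (Z.of_nat b - a)) + Tz b K' (r / b + 1))
  end.

Lemma Tz_step b K a v : (a < b)%nat ->
  Tz b (S K) (a + b * v) =
  (Z.of_nat b - Z.of_nat a) * (Z.of_nat (b ^ K) * (Z.of_nat a * Z.of_nat a) + Tz b K v)
  + Z.of_nat a * (Z.of_nat (b ^ K) * ((Z.of_nat b - Z.of_nat a) * (Z.of_nat b - Z.of_nat a)) + Tz b K (v + 1)).
Proof. intros H. simpl Tz. rewrite mod_ab, div_ab by auto. reflexivity. Qed.

Definition Inv b K :=
  (forall u, Tz b K u <= Z.of_nat (b ^ K) * Z.of_nat b ^ 2 * L b u) /\
  (forall u, Tz b K (u + 1) <= Z.of_nat (b ^ K) * Z.of_nat b ^ 2 * L b u + Z.of_nat (b ^ K) * Z.of_nat b) /\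
  (forall u, (u mod b = b - 1)%nat ->
     Tz b K u + Z.of_nat (b ^ K) * Z.of_nat b ^ 2 <= Z.of_nat (b ^ K) * Z.of_nat b ^ 2 * L b u + 2 * Z.of_nat (b ^ K) * Z.of_nat b) /\
  (forall u, (u mod b = b - 1)%nat ->
     Tz b K (u + 1) + Z.of_nat (b ^ K) * Z.of_nat b ^ 2 <= Z.of_nat (b ^ K) * Z.of_nat b ^ 2 * L b u + Z.of_nat (b ^ K) * Z.of_nat b).

Lemma Inv_0 b : (2 <= b)%nat -> Inv b 0.
Proof.
  intros Hb. unfold Inv. simpl Tz. rewrite Nat.pow_0_r. simpl Z.of_nat.
  repeat split; intros u; pose proof (L_nonneg b u); try nia;
  intros Hu; assert (1 <= L b u) by (apply L_pos; lia); nia.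
Qed.

Lemma decomp b u : (2 <= b)%nat -> exists a v, (a < b)%nat /\ u = (a + b * v)%nat /\ a = (u mod b)%nat /\ v = (u / b)%nat.
Proof.
  intros Hb. exists (u mod b)%nat, (u / b)%nat. split; [apply Nat.mod_upper_bound; lia|].
  split; auto. pose proof (Nat.div_mod u b ltac:(lia)). lia.
Qed.

Lemma Inv_S b K : (2 <= b)%nat -> Inv b K -> Inv b (S K).
Proof.
  intros Hb [IA [IB [IC ID]]].
  assert (Epow : Z.of_nat (b ^ S K) = Z.of_nat b * Z.of_nat (b ^ K)) by (rewrite Nat.pow_succ_r'; lia).
  unfold Inv. setoid_rewrite Epow.
  assert (HP : 0 < Z.of_nat (b ^ K)) by (pose proof (Nat.pow_nonzero b K ltac:(lia)); lia).
  remember (Z.of_nat (b ^ K)) as P eqn:HPdef.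
  assert (Hbz : 2 <= Z.of_nat b) by lia.
  set (bz := Z.of_nat b) in *.
  assert (HC : forall u, (u mod b = b - 1)%nat ->
     Tz b (S K) u + bz * P * bz ^ 2 <= bz * P * bz ^ 2 * L b u + 2 * (bz * P) * bz).
  { intros u Hu. destruct (decomp b u Hb) as [a [v [Ha [E [Ea Ev]]]]].
    rewrite <- Ea in Hu. subst u. rewrite Tz_step by auto. rewrite <- HPdef. fold bz. rewrite L_step by auto.
    rewrite Hu. rewrite Nat.eqb_refl. destruct (Nat.eqb_spec (b-1) 0); [lia|].
    assert (Ea' : Z.of_nat (b - 1) = bz - 1) by lia. rewrite Ea'.
    destruct (Nat.eqb_spec (v mod b) (b-1)) as [Hv|Hv]; cbn [andb negb].
    - specialize (IC v Hv). specialize (ID v Hv).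
      assert ((bz - 1) * Tz b K (v + 1) <= (bz - 1) * (P * bz ^ 2 * L b v + P * bz - P * bz ^ 2))
        by (apply Z.mul_le_mono_nonneg_l; lia).
      nia.
    - specialize (IA v). specialize (IB v).
      assert ((bz - 1) * Tz b K (v + 1) <= (bz - 1) * (P * bz ^ 2 * L b v + P * bz))
        by (apply Z.mul_le_mono_nonneg_l; lia).
      nia. }
  split; [|split; [|split]].
  -
    intros u. destruct (decomp b u Hb) as [a [v [Ha [E [Ea Ev]]]]].
    destruct (Nat.eqb_spec a (b-1)) as [Hab|Hab].
    + assert (Hu : (u mod b = b - 1)%nat) by lia. specialize (HC u Hu). nia.
    + subst u. rewrite Tz_step by auto. rewrite <- HPdef. fold bz. rewrite L_step by auto.
      destruct (Nat.eqb_spec a (b-1)); [lia|]. cbn [andb negb].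
      specialize (IA v). specialize (IB v). pose proof (L_nonneg b v).
      assert ((bz - Z.of_nat a) * Tz b K v <= (bz - Z.of_nat a) * (P * bz ^ 2 * L b v))
        by (apply Z.mul_le_mono_nonneg_l; lia).
      assert (Z.of_nat a * Tz b K (v + 1) <= Z.of_nat a * (P * bz ^ 2 * L b v + P * bz))
        by (apply Z.mul_le_mono_nonneg_l; lia).
      destruct (Nat.eqb_spec a 0).
      * subst a. simpl Z.of_nat in *. nia.
      * assert (Z.of_nat a * (bz - Z.of_nat a + 1) <= bz * bz) by nia.
        nia.
  -
    intros u. destruct (decomp b u Hb) as [a [v [Ha [E [Ea Ev]]]]].
    destruct (Nat.eqb_spec a (b-1)) as [Hab|Hab].
    + assert (E1 : (u + 1 = 0 + b * (v + 1))%nat) by (subst; nia).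
      rewrite E1, Tz_step by lia. rewrite <- HPdef. fold bz. subst u. rewrite L_step by auto.
      rewrite Hab, Nat.eqb_refl. destruct (Nat.eqb_spec (b-1) 0); [lia|].
      specialize (IB v). pose proof (L_nonneg b v). simpl Z.of_nat.
      destruct (Nat.eqb (v mod b) (b-1)); cbn [andb negb]; nia.
    + assert (E1 : (u + 1 = (a + 1) + b * v)%nat) by lia.
      rewrite E1, Tz_step by lia. rewrite <- HPdef. fold bz. subst u. rewrite L_step by auto.
      destruct (Nat.eqb_spec a (b-1)); [lia|]. cbn [andb negb].
      specialize (IA v). specialize (IB v). pose proof (L_nonneg b v).
      assert ((bz - Z.of_nat (a + 1)) * Tz b K v <= (bz - Z.of_nat (a+1)) * (P * bz ^ 2 * L b v))
        by (apply Z.mul_le_mono_nonneg_l; lia).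
      assert (Z.of_nat (a + 1) * Tz b K (v + 1) <= Z.of_nat (a+1) * (P * bz ^ 2 * L b v + P * bz))
        by (apply Z.mul_le_mono_nonneg_l; lia).
      destruct (Nat.eqb_spec a 0).
      * subst a. simpl Z.of_nat in *. nia.
      * assert (Z.of_nat (a+1) * (bz - Z.of_nat (a+1) + 1) <= bz * bz) by nia.
        nia.
  - exact HC.
  -
    intros u Hu. destruct (decomp b u Hb) as [a [v [Ha [E [Ea Ev]]]]].
    assert (Hab : a = (b - 1)%nat) by lia.
    assert (E1 : (u + 1 = 0 + b * (v + 1))%nat) by (subst; nia).
    rewrite E1, Tz_step by lia. rewrite <- HPdef. fold bz. subst u. rewrite L_step by auto.
    rewrite Hab, Nat.eqb_refl. destruct (Nat.eqb_spec (b-1) 0); [lia|].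
    simpl Z.of_nat.
    destruct (Nat.eqb_spec (v mod b) (b-1)) as [Hv|Hv]; cbn [andb negb].
    + specialize (ID v Hv). nia.
    + specialize (IB v). nia.
Qed.

Lemma Inv_all b K : (2 <= b)%nat -> Inv b K.
Proof. intros Hb. induction K. apply Inv_0; auto. apply Inv_S; auto. Qed.

Lemma Tz_bound b K u : (2 <= b)%nat -> Tz b K u <= Z.of_nat (b ^ K) * Z.of_nat b ^ 2 * L b u.
Proof. intros Hb. apply (Inv_all b K Hb). Qed.
Close Scope Z_scope. Open Scope R_scope.

Fixpoint sumR (n : nat) (h : nat -> R) : R :=
  match n with O => 0 | S n' => sumR n' h + h n' end.

Lemma sumR_ext n h1 h2 : (forall i, (i < n)%nat -> h1 i = h2 i) -> sumR n h1 = sumR n h2.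
Proof. induction n; simpl; intros H; auto. rewrite IHn by (intros; apply H; lia). rewrite H by lia. auto. Qed.

Lemma sumR_le n h1 h2 : (forall i, (i < n)%nat -> h1 i <= h2 i) -> sumR n h1 <= sumR n h2.
Proof. induction n; simpl; intros H. lra. assert (h1 n <= h2 n) by (apply H; lia).
  assert (sumR n h1 <= sumR n h2) by (apply IHn; intros; apply H; lia). lra. Qed.

Lemma sumR_nonneg n h : (forall i, (i < n)%nat -> 0 <= h i) -> 0 <= sumR n h.
Proof. induction n; simpl; intros H. lra. assert (0 <= h n) by (apply H; lia).
  assert (0 <= sumR n h) by (apply IHn; intros; apply H; lia). lra. Qed.

Lemma sumR_plus n h1 h2 : sumR n (fun i => h1 i + h2 i) = sumR n h1 + sumR n h2.
Proof. induction n; simpl; [lra|]. rewrite IHn. lra. Qed.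

Lemma sumR_scal n c h : sumR n (fun i => c * h i) = c * sumR n h.
Proof. induction n; simpl; [lra|]. rewrite IHn. lra. Qed.

Lemma sumR_const n c : sumR n (fun _ => c) = INR n * c.
Proof. induction n; simpl sumR. simpl. lra. rewrite IHn, S_INR. lra. Qed.

Lemma sumR_add p q h : sumR (p + q) h = sumR p h + sumR q (fun i => h (p + i)%nat).
Proof. induction q; simpl. rewrite Nat.add_0_r. lra. rewrite Nat.add_succ_r. simpl. rewrite IHq. lra. Qed.

Lemma sumR_blocks n m h : sumR (n * m) h = sumR n (fun y => sumR m (fun a => h (y * m + a)%nat)).
Proof. induction n; simpl; auto. rewrite Nat.add_comm, sumR_add, IHn. reflexivity. Qed.

Lemma sumR_swap n m g : sumR n (fun i => sumR m (fun j => g i j)) = sumR m (fun j => sumR n (fun i => g i j)).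
Proof. induction n; simpl. rewrite sumR_const. lra. rewrite IHn, <- sumR_plus. reflexivity. Qed.

Lemma sumR_mono_n n m h : (n <= m)%nat -> (forall i, 0 <= h i) -> sumR n h <= sumR m h.
Proof. intros H Hh. replace m with (n + (m - n))%nat by lia. rewrite sumR_add.
  assert (0 <= sumR (m - n) (fun i => h (n + i)%nat)) by (apply sumR_nonneg; auto). lra. Qed.

Lemma sumR_ltb n k X Y : sumR n (fun a => if Nat.ltb a k then X else Y) = INR (Nat.min n k) * X + INR (n - k) * Y.
Proof.
  induction n; simpl sumR. simpl. lra. rewrite IHn.
  destruct (Nat.ltb_spec n k).
  - rewrite (Nat.min_l (S n)) by lia. rewrite Nat.min_l by lia.
    replace (S n - k)%nat with 0%nat by lia. replace (n - k)%nat with 0%nat by lia. rewrite S_INR. lra.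
  - rewrite !Nat.min_r by lia. replace (S n - k)%nat with (S (n - k)) by lia. rewrite S_INR. lra.
Qed.

Definition Dt b K r x : Z := (Z.of_nat (digsum b ((x + r) mod b ^ K)) - Z.of_nat (digsum b x))%Z.

Lemma mod_split b P c z : (0 < b)%nat -> (0 < P)%nat -> (c < b)%nat -> ((c + b * z) mod (b * P) = c + b * (z mod P))%nat.
Proof.
  intros. rewrite Nat.Div0.mod_mul_r. rewrite mod_ab, div_ab by auto. reflexivity.
Qed.

Lemma Dt_step b K r a y : (2 <= b)%nat -> (a < b)%nat ->
  Dt b (S K) r (a + b * y) =
  if Nat.ltb (a + r mod b) b then (Z.of_nat (r mod b) + Dt b K (r / b) y)%Z
  else (Z.of_nat (r mod b) - Z.of_nat b + Dt b K (r / b + 1) y)%Z.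
Proof.
  intros Hb Ha. unfold Dt. rewrite Nat.pow_succ_r'.
  assert (HP : (0 < b ^ K)%nat) by (apply Nat.neq_0_lt_0, Nat.pow_nonzero; lia).
  pose proof (Nat.div_mod r b ltac:(lia)).
  assert (Hr0 : (r mod b < b)%nat) by (apply Nat.mod_upper_bound; lia).
  rewrite (digsum_step b a y) by auto.
  destruct (Nat.ltb_spec (a + r mod b) b).
  - replace (a + b * y + r)%nat with ((a + r mod b) + b * (y + r / b))%nat by lia.
    rewrite mod_split by lia. rewrite digsum_step by lia. lia.
  - replace (a + b * y + r)%nat with ((a + r mod b - b) + b * (y + (r / b + 1)))%nat by lia.
    rewrite mod_split by lia. rewrite digsum_step by lia. replace (y + (r / b + 1))%nat with (y + (r/b+1))%nat by lia. lia.
Qed.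

Lemma sum_pow_S b K h : (2 <= b)%nat ->
  sumR (b ^ S K) h = sumR b (fun a => sumR (b ^ K) (fun y => h (a + b * y)%nat)).
Proof.
  intros Hb. rewrite Nat.pow_succ_r', (Nat.mul_comm b (b ^ K)), sumR_blocks, sumR_swap. apply sumR_ext. intros a Ha.
  apply sumR_ext. intros y Hy. f_equal. lia.
Qed.

Lemma Dt_mean b K r : (2 <= b)%nat -> sumR (b ^ K)%nat (fun x => IZR (Dt b K r x)) = 0.
Proof.
  intros Hb. revert r. induction K; intros r.
  - simpl. unfold Dt. rewrite Nat.pow_0_r, Nat.mod_1_r, digsum_0. simpl. lra.
  - rewrite sum_pow_S by auto.
    assert (Hr0 : (r mod b < b)%nat) by (apply Nat.mod_upper_bound; lia).
    transitivity (sumR b (fun a => if Nat.ltb a (b - r mod b)%nat then INR (b ^ K)%nat * INR (r mod b)%nat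
                                    else INR (b ^ K)%nat * (INR (r mod b)%nat - INR b))).
    + apply sumR_ext. intros a Ha.
      transitivity (sumR (b ^ K)%nat (fun y => if Nat.ltb a (b - r mod b)%nat then INR (r mod b)%nat + IZR (Dt b K (r / b)%nat y)
                                         else INR (r mod b)%nat - INR b + IZR (Dt b K (r / b + 1)%nat y))).
      * apply sumR_ext. intros y Hy. rewrite Dt_step by auto.
        destruct (Nat.ltb_spec (a + r mod b) b); destruct (Nat.ltb_spec a (b - r mod b)%nat); try lia;
        rewrite ?plus_IZR, ?minus_IZR, <- ?INR_IZR_INZ; reflexivity.
      * destruct (Nat.ltb a (b - r mod b)%nat); rewrite sumR_plus, sumR_const, IHK; lra.
    + rewrite sumR_ltb. rewrite Nat.min_r by lia. replace (b - (b - r mod b)%nat)%nat with (r mod b)%nat by lia.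
      rewrite minus_INR by lia. lra.
Qed.

Lemma Dt_sq b K r : (2 <= b)%nat -> sumR (b ^ K)%nat (fun x => IZR (Dt b K r x) ^ 2) = IZR (Tz b K r).
Proof.
  intros Hb. revert r. induction K; intros r.
  - simpl. unfold Dt. rewrite Nat.pow_0_r, Nat.mod_1_r, digsum_0. simpl. lra.
  - rewrite sum_pow_S by auto.
    assert (Hr0 : (r mod b < b)%nat) by (apply Nat.mod_upper_bound; lia).
    set (r0 := INR (r mod b)%nat). set (B := INR b). set (P := INR (b ^ K)%nat).
    transitivity (sumR b (fun a => if Nat.ltb a (b - r mod b)%nat then P * r0 ^ 2 + IZR (Tz b K (r / b)%nat)
                                    else P * (r0 - B) ^ 2 + IZR (Tz b K (r / b + 1)%nat))).
    + apply sumR_ext. intros a Ha.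
      transitivity (sumR (b ^ K)%nat (fun y => if Nat.ltb a (b - r mod b)%nat then (r0 + IZR (Dt b K (r / b)%nat y)) ^ 2
                                         else (r0 - B + IZR (Dt b K (r / b + 1)%nat y)) ^ 2)).
      * apply sumR_ext. intros y Hy. rewrite Dt_step by auto.
        destruct (Nat.ltb_spec (a + r mod b) b); destruct (Nat.ltb_spec a (b - r mod b)%nat); try lia;
        rewrite ?plus_IZR, ?minus_IZR, <- ?INR_IZR_INZ; reflexivity.
      * destruct (Nat.ltb a (b - r mod b)%nat).
        -- rewrite (sumR_ext _ _ (fun y => r0 ^ 2 + (2 * r0) * IZR (Dt b K (r / b)%nat y) + IZR (Dt b K (r / b)%nat y) ^ 2))
             by (intros; ring).
           rewrite !sumR_plus, sumR_const, sumR_scal, IHK, Dt_mean by auto. fold P. ring.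
        -- rewrite (sumR_ext _ _ (fun y => (r0 - B) ^ 2 + (2 * (r0 - B)) * IZR (Dt b K (r / b + 1)%nat y) + IZR (Dt b K (r / b + 1)%nat y) ^ 2))
             by (intros; ring).
           rewrite !sumR_plus, sumR_const, sumR_scal, IHK, Dt_mean by auto. fold P. ring.
    + rewrite sumR_ltb. rewrite Nat.min_r by lia. replace (b - (b - r mod b)%nat)%nat with (r mod b)%nat by lia.
      cbn [Tz]. rewrite !plus_IZR, !mult_IZR, !plus_IZR, !mult_IZR, !minus_IZR.
      rewrite <- !INR_IZR_INZ. rewrite minus_INR by lia. fold r0 B P. ring.
Qed.

Lemma digsum_blk b K q y : (2 <= b)%nat -> (y < b ^ K)%nat -> digsum b (q * b ^ K + y) = (digsum b q + digsum b y)%nat.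
Proof.
  intros Hb. revert y. induction K; intros y Hy.
  - rewrite Nat.pow_0_r in *. replace y with 0%nat by lia. rewrite digsum_0. replace (q * 1 + 0)%nat with q by lia. lia.
  - destruct (decomp b y Hb) as [a [v [Ha [E _]]]]. subst y.
    rewrite Nat.pow_succ_r' in *.
    replace (q * (b * b ^ K) + (a + b * v))%nat with (a + b * (q * b ^ K + v))%nat by ring.
    rewrite !digsum_step by auto. rewrite IHK by nia. lia.
Qed.

Lemma digsum_le b K y : (2 <= b)%nat -> (y < b ^ K)%nat -> (digsum b y <= (b - 1) * K)%nat.
Proof.
  intros Hb. revert y. induction K; intros y Hy.
  - rewrite Nat.pow_0_r in *. replace y with 0%nat by lia. rewrite digsum_0. lia.
  - destruct (decomp b y Hb) as [a [v [Ha [E _]]]]. subst y.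
    rewrite Nat.pow_succ_r' in *. rewrite digsum_step by auto.
    assert (v < b ^ K)%nat by nia. specialize (IHK v H). nia.
Qed.

Lemma Delta_blk b r K q x : (2 <= b)%nat -> (x < b ^ K - r)%nat ->
  Defs.Delta b r (q * b ^ K + x)%nat = Dt b K r x.
Proof.
  intros Hb Hx. unfold Defs.Delta, Dt. rewrite Nat.mod_small by lia.
  replace (q * b ^ K + x + r)%nat with (q * b ^ K + (x + r))%nat by lia.
  rewrite !digsum_blk by lia. lia.
Qed.

Lemma Dt_bound b r K x : (2 <= b)%nat -> (x < b ^ K - r)%nat ->
  (- Z.of_nat ((b - 1) * K) <= Dt b K r x <= Z.of_nat ((b - 1) * K))%Z.
Proof.
  intros Hb Hx. unfold Dt. rewrite Nat.mod_small by lia.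
  pose proof (digsum_le b K (x + r) Hb ltac:(lia)).
  pose proof (digsum_le b K x Hb ltac:(lia)). lia.
Qed.

Definition SPhi b r (phi : Z -> R) N := sumR N (fun n => phi (Defs.Delta b r n)).
Definition Good b r K (phi : Z -> R) :=
  sumR (b ^ K) (fun x => if Nat.ltb x (b ^ K - r) then phi (Dt b K r x) else 0).

Lemma Good_nonneg b r K phi : (forall e, 0 <= phi e) -> 0 <= Good b r K phi.
Proof. intros H. apply sumR_nonneg. intros. destruct (Nat.ltb _ _); auto; lra. Qed.

Lemma block_q b r K phi C q : (2 <= b)%nat -> (r < b ^ K)%nat -> (forall e, 0 <= phi e <= C) ->
  Good b r K phi <= sumR (b ^ K) (fun x => phi (Defs.Delta b r (q * b ^ K + x)%nat)) <= Good b r K phi + INR r * C.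
Proof.
  intros Hb Hr Hphi. split.
  - apply sumR_le. intros x Hx. destruct (Nat.ltb_spec x (b ^ K - r)).
    + rewrite Delta_blk by auto. lra.
    + apply Hphi.
  - transitivity (sumR (b ^ K) (fun x => (if Nat.ltb x (b ^ K - r) then phi (Dt b K r x) else 0)
                                        + (if Nat.ltb x (b ^ K - r) then 0 else C))).
    + apply sumR_le. intros x Hx. destruct (Nat.ltb_spec x (b ^ K - r)).
      * rewrite Delta_blk by auto. lra.
      * pose proof (Hphi (Defs.Delta b r (q * b ^ K + x)%nat)). lra.
    + rewrite sumR_plus. unfold Good. rewrite sumR_ltb.
      replace (b ^ K - (b ^ K - r))%nat with r by lia. lra.
Qed.

Lemma SPhi_upper b r K phi C N : (2 <= b)%nat -> (r < b ^ K)%nat -> (forall e, 0 <= phi e <= C) ->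
  SPhi b r phi N <= (INR (N / b ^ K) + 1) * (Good b r K phi + INR r * C).
Proof.
  intros Hb Hr Hphi. unfold SPhi.
  assert (HB : (b ^ K <> 0)%nat) by (apply Nat.pow_nonzero; lia).
  transitivity (sumR ((N / b ^ K + 1) * b ^ K) (fun n => phi (Defs.Delta b r n))).
  - apply sumR_mono_n. pose proof (Nat.div_mod N (b ^ K) HB). pose proof (Nat.mod_upper_bound N (b ^ K) HB). nia.
    intros; apply Hphi.
  - rewrite sumR_blocks. rewrite <- (Rmult_1_r (INR (N / b ^ K) + 1)).
    replace (INR (N / b ^ K) + 1) with (INR (N / b ^ K + 1)) by (rewrite plus_INR; simpl; lra).
    rewrite Rmult_1_r, <- sumR_const. apply sumR_le. intros q Hq.
    apply (block_q b r K phi C q); auto.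
Qed.

Lemma SPhi_lower b r K phi C N : (2 <= b)%nat -> (r < b ^ K)%nat -> (forall e, 0 <= phi e <= C) ->
  INR (N / b ^ K) * Good b r K phi <= SPhi b r phi N.
Proof.
  intros Hb Hr Hphi. unfold SPhi.
  assert (HB : (b ^ K <> 0)%nat) by (apply Nat.pow_nonzero; lia).
  transitivity (sumR ((N / b ^ K) * b ^ K) (fun n => phi (Defs.Delta b r n))).
  - rewrite sumR_blocks, <- sumR_const. apply sumR_le. intros q Hq.
    apply (block_q b r K phi C q); auto.
  - apply sumR_mono_n. pose proof (Nat.div_mod N (b ^ K) HB). nia.
    intros; apply Hphi.
Qed.

Lemma div_bounds N B : (B <> 0)%nat -> INR (N / B) * INR B <= INR N < (INR (N / B) + 1) * INR B.
Proof.
  intros HB. pose proof (Nat.div_mod N B HB). pose proof (Nat.mod_upper_bound N B HB).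
  rewrite <- mult_INR. split.
  - apply le_INR. nia.
  - replace (INR (N / B) + 1) with (INR (N / B + 1)) by (rewrite plus_INR; simpl; lra).
    rewrite <- mult_INR. apply lt_INR. nia.
Qed.

Lemma inv_n_lim : is_lim_seq (fun N => / INR N) 0.
Proof.
  pose proof (is_lim_seq_inv _ _ is_lim_seq_INR). simpl in H. apply H. discriminate.
Qed.

Lemma choose_K b r M : (2 <= b)%nat -> exists K, (r < b ^ K)%nat /\ M < INR (b ^ K).
Proof.
  intros Hb. destruct (archimed M) as [H1 _].
  exists (Z.to_nat (up M) + r)%nat. split.
  - apply lt_pow_le; lia.
  - pose proof (lt_pow_le b (Z.to_nat (up M) + r) (Z.to_nat (up M) + r) Hb ltac:(lia)) as H.
    apply lt_INR in H. rewrite plus_INR in H. pose proof (pos_INR r).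
    destruct (Z_le_gt_dec 0 (up M)).
    + rewrite INR_IZR_INZ, Z2Nat.id in H by auto. lra.
    + assert (IZR (up M) <= 0) by (apply IZR_le; lia). pose proof (pos_INR (Z.to_nat (up M))). lra.
Qed.

Lemma ratio_bounds X q n Bi G U : 0 < n -> 0 < Bi -> q * Bi <= n -> n < (q + 1) * Bi -> 0 <= G ->
  q * G <= X -> X <= (q + 1) * U -> 0 <= U -> 0 <= q ->
  G / Bi - G / n <= X / n <= U / Bi + U / n.
Proof.
  intros Hn HB H1 H2 HG HX1 HX2 HU Hq.
  assert (Hq1 : n / Bi - 1 <= q). { apply Rmult_le_reg_r with Bi; auto. unfold Rdiv.
    rewrite Rmult_minus_distr_r, Rmult_assoc, Rinv_l by lra. lra. }
  assert (Hq2 : q <= n / Bi). { apply Rmult_le_reg_r with Bi; auto. unfold Rdiv.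
    rewrite Rmult_assoc, Rinv_l by lra. lra. }
  split.
  - apply Rle_trans with (q * G / n).
    + apply Rle_trans with ((n / Bi - 1) * G / n).
      * right. field. lra.
      * unfold Rdiv. apply Rmult_le_compat_r. left; apply Rinv_0_lt_compat; lra.
        apply Rmult_le_compat_r; lra.
    + unfold Rdiv. apply Rmult_le_compat_r. left; apply Rinv_0_lt_compat; lra. lra.
  - apply Rle_trans with ((q + 1) * U / n).
    + unfold Rdiv. apply Rmult_le_compat_r. left; apply Rinv_0_lt_compat; lra. lra.
    + apply Rle_trans with ((n / Bi + 1) * U / n).
      * unfold Rdiv. apply Rmult_le_compat_r. left; apply Rinv_0_lt_compat; lra.
        apply Rmult_le_compat_r; lra.
      * right. field. lra.
Qed.

Lemma SPhi_ratio b r K phi C N : (2 <= b)%nat -> (r < b ^ K)%nat -> (forall e, 0 <= phi e <= C) -> (1 <= N)%nat ->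
  Good b r K phi / INR (b ^ K) - Good b r K phi / INR N <= SPhi b r phi N / INR N
  <= (Good b r K phi + INR r * C) / INR (b ^ K) + (Good b r K phi + INR r * C) / INR N.
Proof.
  intros Hb Hr Hphi HN.
  assert (HB : (b ^ K <> 0)%nat) by (apply Nat.pow_nonzero; lia).
  assert (HC : 0 <= C) by (pose proof (Hphi 0%Z); lra).
  pose proof (div_bounds N (b ^ K) HB).
  apply ratio_bounds with (q := INR (N / b ^ K)).
  - apply lt_0_INR; lia.
  - apply lt_0_INR; lia.
  - lra.
  - lra.
  - apply Good_nonneg. intros; apply Hphi.
  - apply (SPhi_lower b r K phi C); auto.
  - apply (SPhi_upper b r K phi C); auto.
  - pose proof (Good_nonneg b r K phi ltac:(intros; apply Hphi)). pose proof (pos_INR r). nra.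
  - apply pos_INR.
Qed.

Lemma approx_lim (u : nat -> R) :
  (forall eps, 0 < eps -> exists c N0, forall N, (N0 <= N)%nat -> c - eps <= u N <= c + eps) ->
  ex_finite_lim_seq u.
Proof.
  intros H. apply ex_lim_seq_cauchy_corr. intros [eps Heps]. simpl.
  destruct (H (eps / 3)) as [c [N0 HN]]. lra.
  exists N0. intros n m Hn Hm. pose proof (HN n Hn). pose proof (HN m Hm).
  apply Rabs_def1; lra.
Qed.

Lemma large_N (X : R) : exists N0, forall N, (N0 <= N)%nat -> X <= INR N /\ (1 <= N)%nat.
Proof.
  destruct (archimed X) as [H1 _]. exists (Z.to_nat (up X) + 1)%nat. intros N HN. split; [|lia].
  apply le_INR in HN. rewrite plus_INR in HN. simpl in HN.
  destruct (Z_le_gt_dec 0 (up X)).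
  + rewrite INR_IZR_INZ, Z2Nat.id in HN by auto. lra.
  + assert (IZR (up X) <= 0) by (apply IZR_le; lia). pose proof (pos_INR (Z.to_nat (up X))). lra.
Qed.

Definition ind (d : Z) (e : Z) : R := if Z.eqb e d then 1 else 0.

Lemma count_SPhi b r d N : INR (count_Delta b r d N) = SPhi b r (ind d) N.
Proof.
  unfold count_Delta, SPhi. induction N.
  - simpl. reflexivity.
  - rewrite seq_S, filter_app, length_app. simpl sumR. rewrite plus_INR, IHN. simpl.
    unfold ind. destruct (Z.eqb (Defs.Delta b r N) d); simpl; lra.
Qed.

Lemma Good_le_B b r K phi C : (forall e, 0 <= phi e <= C) -> Good b r K phi <= INR (b ^ K) * C.
Proof.
  intros H. unfold Good. rewrite <- sumR_const. apply sumR_le. intros.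
  destruct (Nat.ltb _ _); pose proof (H (Dt b K r i)); pose proof (H 0%Z); lra.
Qed.

Lemma mu_lim b r d : (2 <= b)%nat ->
  is_lim_seq (fun N => INR (count_Delta b r d N) / INR N) (mu b r d).
Proof.
  intros Hb.
  assert (Hphi : forall e, 0 <= ind d e <= 1) by (intros; unfold ind; destruct (Z.eqb e d); lra).
  assert (Hex : ex_finite_lim_seq (fun N => INR (count_Delta b r d N) / INR N)).
  { apply approx_lim. intros eps Heps.
    destruct (choose_K b r (2 * INR r / eps) Hb) as [K [HrK HK]].
    set (B := INR (b ^ K)) in *.
    assert (HB : 0 < B) by (unfold B; apply lt_0_INR, Nat.neq_0_lt_0, Nat.pow_nonzero; lia).
    set (G := Good b r K (ind d)).
    assert (HG : 0 <= G <= B) by (split; [apply Good_nonneg; intros; apply Hphi|]; 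
                                 pose proof (Good_le_B b r K (ind d) 1 Hphi); fold B in H; fold G in H; lra).
    assert (HrB : INR r < B) by (apply lt_INR in HrK; auto).
    destruct (large_N (4 * B / eps)) as [N0 HN0].
    exists (G / B), N0. intros N HN. destruct (HN0 N HN) as [HN1 HN2].
    rewrite count_SPhi.
    pose proof (SPhi_ratio b r K (ind d) 1 N Hb HrK Hphi HN2) as R. fold B G in R.
    assert (HNpos : 0 < INR N) by (apply lt_0_INR; lia).
    assert (HBN : B / INR N <= eps / 4).
    { apply Rmult_le_reg_r with (INR N); auto. unfold Rdiv. rewrite Rmult_assoc, Rinv_l by lra.
      apply Rmult_le_reg_r with (4 / eps). apply Rdiv_lt_0_compat; lra.
      replace (eps * / 4 * INR N * (4 / eps)) with (INR N) by (field; lra).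
      replace (B * 1 * (4 / eps)) with (4 * B / eps) by (field; lra). lra. }
    assert (HrBe : INR r / B <= eps / 2).
    { apply Rmult_le_reg_r with B; auto. unfold Rdiv. rewrite Rmult_assoc, Rinv_l by lra.
      apply Rmult_le_reg_r with (2 / eps). apply Rdiv_lt_0_compat; lra.
      replace (eps * / 2 * B * (2 / eps)) with B by (field; lra).
      replace (INR r * 1 * (2 / eps)) with (2 * INR r / eps) by (field; lra). lra. }
    assert (G / INR N <= B / INR N) by (unfold Rdiv; apply Rmult_le_compat_r; [left; apply Rinv_0_lt_compat; lra | lra]).
    assert ((G + INR r * 1) / INR N <= 2 * (B / INR N)) by
      (unfold Rdiv; rewrite <- Rmult_assoc; apply Rmult_le_compat_r; [left; apply Rinv_0_lt_compat; lra | lra]).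
    assert ((G + INR r * 1) / B = G / B + INR r / B) by (field; lra).
    split; lra. }
  destruct Hex as [l Hl]. unfold mu. rewrite (is_lim_seq_unique _ _ Hl). simpl. exact Hl.
Qed.

Lemma sum_n_O' (a : nat -> R) : sum_n a 0 = a 0%nat.
Proof. rewrite sum_O. reflexivity. Qed.
Lemma sum_n_S' (a : nat -> R) n : sum_n a (S n) = sum_n a n + a (S n).
Proof. rewrite sum_Sn. reflexivity. Qed.

Definition psi (w : Z -> R) N (e : Z) : R :=
  sum_n (fun k => w (zpos k) * ind (zpos k) e + w (zneg k) * ind (zneg k) e) N.

Lemma SPhi_sum b r (F : nat -> Z -> R) N M :
  SPhi b r (fun e => sum_n (fun k => F k e) N) M = sum_n (fun k => SPhi b r (F k) M) N.
Proof.
  induction N.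
  - rewrite sum_n_O'. unfold SPhi. apply sumR_ext. intros. rewrite sum_n_O'. auto.
  - rewrite sum_n_S', <- IHN. unfold SPhi. rewrite <- sumR_plus. apply sumR_ext. intros.
    rewrite sum_n_S'. auto.
Qed.

Lemma SPhi_lin b r c1 d1 c2 d2 M :
  SPhi b r (fun e => c1 * ind d1 e + c2 * ind d2 e) M = c1 * INR (count_Delta b r d1 M) + c2 * INR (count_Delta b r d2 M).
Proof. rewrite !count_SPhi. unfold SPhi. rewrite sumR_plus, !sumR_scal. reflexivity. Qed.

Lemma sum_n_div (f : nat -> R) m N : sum_n (fun k => f k / m) N = sum_n f N / m.
Proof. induction N; [rewrite !sum_n_O'; auto|]. rewrite !sum_n_S', IHN. unfold Rdiv. symmetry. apply Rmult_plus_distr_r. Qed.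

Lemma sum_n_ext' (f g : nat -> R) N : (forall k, f k = g k) -> sum_n f N = sum_n g N.
Proof. intros H. induction N; [rewrite !sum_n_O'; auto|]. rewrite !sum_n_S', IHN, H. auto. Qed.

Lemma lim_combo b r (w : Z -> R) N : (2 <= b)%nat ->
  is_lim_seq (fun M => SPhi b r (psi w N) M / INR M)
    (sum_n (fun k => w (zpos k) * mu b r (zpos k) + w (zneg k) * mu b r (zneg k)) N).
Proof.
  intros Hb. unfold psi.
  apply is_lim_seq_ext with (fun M => sum_n (fun k => w (zpos k) * (INR (count_Delta b r (zpos k) M) / INR M)
                                            + w (zneg k) * (INR (count_Delta b r (zneg k) M) / INR M)) N).
  { intros M. rewrite SPhi_sum. rewrite <- sum_n_div. apply sum_n_ext'. intros k.
    rewrite SPhi_lin. unfold Rdiv. ring. }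
  induction N.
  - apply is_lim_seq_ext with (fun M => w (zpos 0) * (INR (count_Delta b r (zpos 0) M) / INR M)
                                       + w (zneg 0) * (INR (count_Delta b r (zneg 0) M) / INR M)).
    { intros. rewrite sum_n_O'. auto. }
    rewrite sum_n_O'. apply is_lim_seq_plus'; apply (is_lim_seq_scal_l _ _ (Finite _)); apply mu_lim; auto.
  - apply is_lim_seq_ext with (fun M => sum_n (fun k => w (zpos k) * (INR (count_Delta b r (zpos k) M) / INR M)
                                            + w (zneg k) * (INR (count_Delta b r (zneg k) M) / INR M)) N
                + (w (zpos (S N)) * (INR (count_Delta b r (zpos (S N)) M) / INR M)
                                       + w (zneg (S N)) * (INR (count_Delta b r (zneg (S N)) M) / INR M))).
    { intros. rewrite sum_n_S'. auto. }
    rewrite sum_n_S'. apply is_lim_seq_plus'; auto.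
    apply is_lim_seq_plus'; apply (is_lim_seq_scal_l _ _ (Finite _)); apply mu_lim; auto.
Qed.

Lemma psi_closed (w : Z -> R) N e :
  psi w N e = if (Z.leb (- Z.of_nat N - 1) e && Z.leb e (Z.of_nat N))%bool then w e else 0.
Proof.
  unfold psi. induction N.
  - rewrite sum_n_O'. unfold ind, zpos, zneg.
    destruct (Z.eqb_spec e (Z.of_nat 0)); destruct (Z.eqb_spec e (- Z.of_nat 1));
    destruct (Z.leb_spec (- Z.of_nat 0 - 1) e); destruct (Z.leb_spec e (Z.of_nat 0)); simpl in *;
    subst; try lia; try ring.
  - rewrite sum_n_S', IHN. unfold ind, zpos, zneg.
    destruct (Z.eqb_spec e (Z.of_nat (S N))); destruct (Z.eqb_spec e (- Z.of_nat (S (S N))));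
    destruct (Z.leb_spec (- Z.of_nat N - 1) e); destruct (Z.leb_spec e (Z.of_nat N));
    destruct (Z.leb_spec (- Z.of_nat (S N) - 1) e); destruct (Z.leb_spec e (Z.of_nat (S N))); simpl in *;
    subst; try lia; try ring.
Qed.

Lemma lim_upper b r K phi C (l : R) : (2 <= b)%nat -> (r < b ^ K)%nat -> (forall e, 0 <= phi e <= C) ->
  is_lim_seq (fun M => SPhi b r phi M / INR M) l ->
  l <= (Good b r K phi + INR r * C) / INR (b ^ K).
Proof.
  intros Hb HrK Hphi Hl.
  set (U := Good b r K phi + INR r * C).
  assert (Hlim : is_lim_seq (fun M => U / INR (b ^ K) + U * / INR M) (U / INR (b ^ K) + U * 0)).
  { apply is_lim_seq_plus'. apply is_lim_seq_const. apply (is_lim_seq_scal_l _ _ (Finite 0)). apply inv_n_lim. }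
  rewrite Rmult_0_r, Rplus_0_r in Hlim.
  refine (is_lim_seq_le_loc _ _ l (U / INR (b ^ K)) _ Hl Hlim).
  exists 1%nat. intros M HM. pose proof (SPhi_ratio b r K phi C M Hb HrK Hphi HM). fold U in H. unfold Rdiv in *. lra.
Qed.

Lemma lim_lower b r K phi C (l : R) : (2 <= b)%nat -> (r < b ^ K)%nat -> (forall e, 0 <= phi e <= C) ->
  is_lim_seq (fun M => SPhi b r phi M / INR M) l ->
  Good b r K phi / INR (b ^ K) <= l.
Proof.
  intros Hb HrK Hphi Hl.
  set (G := Good b r K phi).
  assert (Hlim : is_lim_seq (fun M => G / INR (b ^ K) - G * / INR M) (G / INR (b ^ K) - G * 0)).
  { apply is_lim_seq_minus'. apply is_lim_seq_const. apply (is_lim_seq_scal_l _ _ (Finite 0)). apply inv_n_lim. }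
  rewrite Rmult_0_r, Rminus_0_r in Hlim.
  refine (is_lim_seq_le_loc _ _ (G / INR (b ^ K)) l _ Hlim Hl).
  exists 1%nat. intros M HM. pose proof (SPhi_ratio b r K phi C M Hb HrK Hphi HM). fold G in H. unfold Rdiv in *. lra.
Qed.

Lemma range_sq (N : nat) (e : Z) : (- Z.of_nat N - 1 <= e <= Z.of_nat N)%Z -> IZR e ^ 2 <= (INR N + 1) ^ 2.
Proof.
  intros [H1 H2]. apply IZR_le in H1. apply IZR_le in H2.
  rewrite minus_IZR, opp_IZR, <- INR_IZR_INZ in H1. rewrite <- INR_IZR_INZ in H2.
  pose proof (pos_INR N). nra.
Qed.

Lemma mu_nonneg b r d : (2 <= b)%nat -> 0 <= mu b r d.
Proof.
  intros Hb. pose proof (mu_lim b r d Hb) as H.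
  assert (Hp : forall n, 0 <= INR (count_Delta b r d n) / INR n).
  { intros n. unfold Rdiv. apply Rmult_le_pos; [apply pos_INR|].
    destruct n. simpl. rewrite Rinv_0; lra. left; apply Rinv_0_lt_compat, lt_0_INR; lia. }
  pose proof (is_lim_seq_le (fun _ => 0) _ 0 (mu b r d) Hp (is_lim_seq_const 0) H) as H0.
  simpl in H0. exact H0.
Qed.

Lemma F2 b r N : (2 <= b)%nat ->
  sum_n (fun k => IZR (zpos k) ^ 2 * mu b r (zpos k) + IZR (zneg k) ^ 2 * mu b r (zneg k)) N
  <= INR b ^ 2 * INR (lambda b r).
Proof.
  intros Hb.
  set (w2 := fun e : Z => IZR e ^ 2).
  set (l := sum_n (fun k => IZR (zpos k) ^ 2 * mu b r (zpos k) + IZR (zneg k) ^ 2 * mu b r (zneg k)) N).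
  assert (Hl : is_lim_seq (fun M => SPhi b r (psi w2 N) M / INR M) l) by exact (lim_combo b r w2 N Hb).
  set (C := (INR N + 1) ^ 2).
  assert (Hphi : forall e, 0 <= psi w2 N e <= C).
  { intros e. rewrite psi_closed. unfold w2, C.
    destruct (Z.leb_spec (- Z.of_nat N - 1) e); destruct (Z.leb_spec e (Z.of_nat N)); simpl;
      try (split; [nra | pose proof (pos_INR N); nra]).
    split. nra. apply range_sq; lia. }
  assert (Hbound : forall K, (r < b ^ K)%nat -> l <= INR b ^ 2 * INR (lambda b r) + INR r * C / INR (b ^ K)).
  { intros K HrK. pose proof (lim_upper b r K (psi w2 N) C l Hb HrK Hphi Hl).
    assert (HB : 0 < INR (b ^ K)) by (apply lt_0_INR, Nat.neq_0_lt_0, Nat.pow_nonzero; lia).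
    assert (HG : Good b r K (psi w2 N) <= INR (b ^ K) * (INR b ^ 2 * INR (lambda b r))).
    { apply Rle_trans with (sumR (b ^ K) (fun x => IZR (Dt b K r x) ^ 2)).
      - apply sumR_le. intros x Hx. destruct (Nat.ltb x (b ^ K - r)); [|nra].
        rewrite psi_closed. unfold w2. destruct (_ && _)%bool; nra.
      - rewrite Dt_sq by auto. pose proof (Tz_bound b K r Hb) as HT. apply IZR_le in HT.
        unfold L in HT. replace (Z.of_nat b ^ 2)%Z with (Z.of_nat b * Z.of_nat b)%Z in HT by ring.
        rewrite !mult_IZR, <- !INR_IZR_INZ in HT. simpl. lra. }
    apply Rle_trans with ((Good b r K (psi w2 N) + INR r * C) / INR (b ^ K)); auto.
    unfold Rdiv. rewrite Rmult_plus_distr_r.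
    apply Rplus_le_compat_r. apply Rmult_le_reg_r with (INR (b ^ K)); auto.
    rewrite Rmult_assoc, Rinv_l by lra. lra. }
  destruct (Rle_or_lt l (INR b ^ 2 * INR (lambda b r))) as [Hle|Hlt]; auto.
  exfalso. set (delta := l - INR b ^ 2 * INR (lambda b r)).
  assert (Hd : 0 < delta) by (unfold delta; lra).
  destruct (choose_K b r (INR r * C / delta) Hb) as [K [HrK HK]].
  specialize (Hbound K HrK).
  assert (HB : 0 < INR (b ^ K)) by (apply lt_0_INR, Nat.neq_0_lt_0, Nat.pow_nonzero; lia).
  assert (INR r * C / INR (b ^ K) < delta).
  { apply Rmult_lt_reg_r with (INR (b ^ K)); auto. unfold Rdiv. rewrite Rmult_assoc, Rinv_l by lra.
    apply Rmult_lt_reg_r with (/ delta). apply Rinv_0_lt_compat; auto.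
    replace (delta * INR (b ^ K) * / delta) with (INR (b ^ K)) by (field; lra).
    unfold Rdiv in HK. lra. }
  unfold delta in *. lra.
Qed.

Lemma F3 b r : (2 <= b)%nat ->
  is_lim_seq (fun N => sum_n (fun k => mu b r (zpos k) + mu b r (zneg k)) N) 1.
Proof.
  intros Hb. set (w1 := fun _ : Z => 1).
  assert (Hphi : forall N e, 0 <= psi w1 N e <= 1).
  { intros N e. rewrite psi_closed. unfold w1. destruct (_ && _)%bool; lra. }
  assert (Hl : forall N, is_lim_seq (fun M => SPhi b r (psi w1 N) M / INR M)
                   (sum_n (fun k => mu b r (zpos k) + mu b r (zneg k)) N)).
  { intros N. pose proof (lim_combo b r w1 N Hb) as H. unfold w1 in H.
    eapply is_lim_seq_ext; [|].
    2:{ replace (sum_n (fun k => mu b r (zpos k) + mu b r (zneg k)) N)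
          with (sum_n (fun k => 1 * mu b r (zpos k) + 1 * mu b r (zneg k)) N). exact H.
        apply sum_n_ext'. intros; ring. }
    intros; reflexivity. }
  assert (Hup : forall N, sum_n (fun k => mu b r (zpos k) + mu b r (zneg k)) N <= 1).
  { intros N.
    assert (Hev : eventually (fun M => SPhi b r (psi w1 N) M / INR M <= 1)).
    { exists 1%nat. intros M HM.
      assert (HS : SPhi b r (psi w1 N) M <= INR M).
      { unfold SPhi. rewrite <- (Rmult_1_r (INR M)), <- sumR_const. apply sumR_le; intros; apply Hphi. }
      assert (HMp : 0 < INR M) by (apply lt_0_INR; lia).
      unfold Rdiv. apply Rle_trans with (INR M * / INR M).
      apply Rmult_le_compat_r; [left; apply Rinv_0_lt_compat; lra | lra].
      rewrite Rinv_r; lra. }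
    pose proof (is_lim_seq_le_loc _ _ _ 1 Hev (Hl N) (is_lim_seq_const 1)). simpl in H. exact H. }
  assert (Hlow : forall K N, (r < b ^ K)%nat -> ((b - 1) * K <= N)%nat ->
     1 - INR r / INR (b ^ K) <= sum_n (fun k => mu b r (zpos k) + mu b r (zneg k)) N).
  { intros K N HrK HN. pose proof (lim_lower b r K (psi w1 N) 1 _ Hb HrK (Hphi N) (Hl N)).
    assert (HB : 0 < INR (b ^ K)) by (apply lt_0_INR, Nat.neq_0_lt_0, Nat.pow_nonzero; lia).
    assert (HG : Good b r K (psi w1 N) = INR (b ^ K - r)).
    { unfold Good. rewrite (sumR_ext _ _ (fun x => if Nat.ltb x (b ^ K - r) then 1 else 0)).
      rewrite sumR_ltb. rewrite Nat.min_r by lia. replace (b ^ K - (b ^ K - r))%nat with r by lia. lra.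
      intros x Hx. destruct (Nat.ltb_spec x (b ^ K - r)); auto.
      rewrite psi_closed. pose proof (Dt_bound b r K x Hb H0).
      destruct (Z.leb_spec (- Z.of_nat N - 1) (Dt b K r x)); destruct (Z.leb_spec (Dt b K r x) (Z.of_nat N));
        simpl; auto; lia. }
    rewrite HG, minus_INR in H by lia.
    replace (1 - INR r / INR (b ^ K)) with ((INR (b ^ K) - INR r) / INR (b ^ K)) by (field; lra). exact H. }
  apply is_lim_seq_spec. intros eps.
  destruct (choose_K b r (INR r / eps) Hb) as [K [HrK HK]].
  assert (HB : 0 < INR (b ^ K)) by (apply lt_0_INR, Nat.neq_0_lt_0, Nat.pow_nonzero; lia).
  assert (He : INR r / INR (b ^ K) < eps).
  { apply Rmult_lt_reg_r with (INR (b ^ K)); auto. unfold Rdiv. rewrite Rmult_assoc, Rinv_l by lra.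
    apply Rmult_lt_reg_r with (/ eps). apply Rinv_0_lt_compat, cond_pos.
    replace (eps * INR (b ^ K) * / eps) with (INR (b ^ K)) by (field; pose proof (cond_pos eps); lra).
    unfold Rdiv in HK. lra. }
  exists ((b - 1) * K)%nat. intros N HN. specialize (Hup N). specialize (Hlow K N HrK HN).
  apply Rabs_def1; lra.
Qed.

Lemma abs_le_sq (z : Z) : Rabs (IZR z) <= IZR z ^ 2.
Proof.
  destruct (Z.eq_dec z 0). subst. simpl. rewrite Rabs_R0. lra.
  assert (1 <= Rabs (IZR z)). { rewrite <- abs_IZR. apply IZR_le. lia. }
  rewrite <- pow2_abs. nra.
Qed.

Lemma sum_n_lin (x y z : nat -> R) m N :
  sum_n (fun k => x k - 2 * m * y k + m ^ 2 * z k) N = sum_n x N - 2 * m * sum_n y N + m ^ 2 * sum_n z N.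
Proof. induction N. rewrite !sum_n_O'. reflexivity. rewrite !sum_n_S', IHN. simpl. ring. Qed.

Theorem mainTheorem15 (b r : nat) (Hb : (2 <= b)%nat) (Hr : (1 <= r)%nat) :
  mu_var b r <= INR b ^ 2 * INR (lambda b r).
Proof.
  set (t := fun k => IZR (zpos k) ^ 2 * mu b r (zpos k) + IZR (zneg k) ^ 2 * mu b r (zneg k)).
  set (g := fun k => IZR (zpos k) * mu b r (zpos k) + IZR (zneg k) * mu b r (zneg k)).
  set (c := fun k => mu b r (zpos k) + mu b r (zneg k)).
  assert (Ht0 : forall k, 0 <= t k).
  { intros k. unfold t. pose proof (mu_nonneg b r (zpos k) Hb). pose proof (mu_nonneg b r (zneg k) Hb). nra. }
  assert (Htb : forall N, sum_n t N <= INR b ^ 2 * INR (lambda b r)) by (intros; apply F2; auto).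
  destruct (ex_finite_lim_seq_incr (sum_n t) (INR b ^ 2 * INR (lambda b r))) as [A HA].
  { intros n. rewrite sum_n_S'. specialize (Ht0 (S n)). lra. }
  { exact Htb. }
  assert (HAle : A <= INR b ^ 2 * INR (lambda b r)).
  { pose proof (is_lim_seq_le _ _ A (INR b ^ 2 * INR (lambda b r)) Htb HA (is_lim_seq_const _)). exact H. }
  assert (Hgs : ex_series g).
  { apply (@ex_series_le R_AbsRing R_CompleteNormedModule g t).
    - intros k. change (norm (g k)) with (Rabs (g k)). unfold g, t.
      pose proof (mu_nonneg b r (zpos k) Hb). pose proof (mu_nonneg b r (zneg k) Hb).
      pose proof (abs_le_sq (zpos k)). pose proof (abs_le_sq (zneg k)).
      eapply Rle_trans. apply Rabs_triang. rewrite !Rabs_mult, !(Rabs_right (mu _ _ _)) by lra. nra.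
    - exists A. exact HA. }
  pose proof (Series_correct g Hgs) as Hg.
  unfold mu_var. set (m := mu_mean b r).
  assert (Hm : is_lim_seq (sum_n g) m) by exact Hg.
  pose proof (F3 b r Hb) as Hc. fold c in Hc.
  assert (Hf : is_lim_seq (sum_n (fun k => (IZR (zpos k) - m) ^ 2 * mu b r (zpos k) + (IZR (zneg k) - m) ^ 2 * mu b r (zneg k)))
                (A - 2 * m * m + m ^ 2 * 1)).
  { apply is_lim_seq_ext with (fun N => sum_n t N - 2 * m * sum_n g N + m ^ 2 * sum_n c N).
    { intros N. rewrite <- sum_n_lin. apply sum_n_ext'. intros k. unfold t, g, c. ring. }
    apply is_lim_seq_plus'. apply is_lim_seq_minus'. exact HA.
    apply (is_lim_seq_scal_l _ _ (Finite m)). exact Hm.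
    apply (is_lim_seq_scal_l _ _ (Finite 1)). exact Hc. }
  unfold Series. rewrite (is_lim_seq_unique _ _ Hf). simpl. nra.
Qed.
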